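(* Every fractal matrix (with parameters $q\ge2$, $m\ge1$) is non-expandable: no bang of it has more columns than it has.
   Context: A subcube of ${\bf Z}_q^n$ is obtained by fixing some coordinates and letting the others run through ${\bf Z}_q$; its star pattern is the vector over ${\bf Z}_q\cup\{*\}$ with fixed values in fixed coordinates and $*$ in free ones. The star matrix of a partition of ${\bf Z}_q^n$ into subcubes is the matrix whose rows are the star patterns of the subcubes; it is A-primitive if no column consists only of $*$. Fractal matrices: $M_{q,0}$ has one row and zero columns; for $m\ge1$, $M_{q,m}$ consists of $q$ horizontal blocks indexed by $a=0,\dots,q-1$, each with $q^{m-1}$ rows; its first column has entry $a$ in every row of block $a$; its remaining columns are divided into $q$ vertical stripes of width equal to the number of columns of $M_{q,m-1}$, and in block $a$ the $a$-th stripe is a copy of $M_{q,m-1}$ while other stripes of block $a$ are all $*$. A fractal matrix is any matrix obtained from some $M_{q,m}$ by permuting rows and columns; it is an A-primitive star matrix of a partition into $q^m$ subcubes of equal dimension. Bang: given an A-primitive star matrix $M$ of a partition into subcubes of equal dimension, a column $i$ and $a\in{\bf Z}_q$, the bang of $M$ at $(i,a)$ is obtained by: (1) deleting column $i$; (2) deleting all rows having in column $i$ a value of ${\bf Z}_q$ different from $a$; (3) replacing each row having $a$ in column $i$ by $q$ identical copies; (4) for each such group of $q$ copies, adjoining a new column having the values $0,1,\dots,q-1$ (each once) in the rows of that group and $*$ in all other rows; (5) deleting all columns consisting only of $*$. $M$ is non-expandable if no bang of $M$ has more columns than $M$. *)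

(* Defs.v *)
(* Star matrices are represented concretely as lists of rows;
   an entry is [Some v] (a fixed value v, meant to lie in {0,..,q-1} = Z_q)
   or [None] (the star symbol).  A matrix is carried together with its number of
   columns [c] (needed e.g. for M_{q,0}, which has one row and zero columns). *)
From mathcomp Require Import all_boot.
Set Implicit Arguments. Unset Strict Implicit. Unset Printing Implicit Defensive.

Definition entry := option nat.
Definition smatrix := seq (seq entry).

Fixpoint fractal (q m : nat) : nat * smatrix :=
  match m with
  | 0 => (0, [:: [::]])
  | m'.+1 =>
    let c := (fractal q m').1 in
    let M := (fractal q m').2 in
    (1 + q * c,
     flatten [seq [seq Some a :: flatten [seq (if b == a then r else nseq c None)
                                         | b <- iota 0 q]
                  | r <- M]
             | a <- iota 0 q])
  end.

Definition permcols (p : seq nat) (M : smatrix) : smatrix :=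
  [seq [seq nth None r j | j <- p] | r <- M].

Definition is_fractal_from (q m c : nat) (M : smatrix) : Prop :=
  (fractal q m).1 = c /\
  exists p : seq nat, perm_eq p (iota 0 c) /\
                      perm_eq M (permcols p (fractal q m).2).

Definition is_fractal (q c : nat) (M : smatrix) : Prop :=
  exists m, is_fractal_from q m c M.

Definition delcol (i : nat) (r : seq entry) : seq entry :=
  take i r ++ drop i.+1 r.

Definition is_a_row (i a : nat) (r : seq entry) : bool := nth None r i == Some a.

Definition bang (q c : nat) (M : smatrix) (i a : nat) : nat * smatrix :=
  let M1 := [seq r <- M | (nth None r i == None) || (nth None r i == Some a)] in
  (* k = number of rows having a in column i = number of new columns *)
  let k := count (is_a_row i a) M1 in
  (* (1),(3),(4): delete column i, replace each a-row (the t-th one) by q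
     copies, the v-th copy getting value v in new column t, star elsewhere *)
  let M2 := flatten
    [seq (let r := nth [::] M1 p in
          if is_a_row i a r then
            let t := count (is_a_row i a) (take p M1) in
            [seq delcol i r ++ [seq (if j == t then Some v else None) | j <- iota 0 k]
            | v <- iota 0 q]
          else [:: delcol i r ++ nseq k None])
    | p <- iota 0 (size M1)] in
  let keep := [seq j <- iota 0 (c.-1 + k) | has (fun r => nth None r j != None) M2] in
  (size keep, [seq [seq nth None r j | j <- keep] | r <- M2]).

Definition non_expandable (q c : nat) (M : smatrix) : Prop :=
  forall i a, i < c -> a < q -> (bang q c M i a).1 <= c.

(* Main.v *)
Require Import Defs.
From mathcomp Require Import all_boot.
From mathcomp Require Import zify.
Set Implicit Arguments. Unset Strict Implicit. Unset Printing Implicit Defensive.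

Lemma flat_size (T : Type) (L : seq (seq T)) n :
  all (fun s => size s == n) L -> size (flatten L) = size L * n.
Proof.
elim: L => [|s L IH] //= /andP[/eqP Hs HL].
by rewrite size_cat Hs IH // mulSn.
Qed.

Lemma flat_nth (T : Type) (x0 : T) (L : seq (seq T)) n b j :
  all (fun s => size s == n) L -> b < size L -> j < n ->
  nth x0 (flatten L) (b * n + j) = nth x0 (nth [::] L b) j.
Proof.
elim: L b => [|s L IH] b //= /andP[/eqP Hs HL] Hb Hj.
case: b Hb => [|b] Hb.
  by rewrite mul0n add0n nth_cat Hs Hj.
rewrite nth_cat Hs mulSn -addnA ltnNge leq_addr /= addKn IH //.
Qed.

Definition Rw (q c' a : nat) (r : seq entry) : seq entry :=
  Some a :: flatten [seq (if b == a then r else nseq c' None) | b <- iota 0 q].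

Lemma fractalS q m : fractal q m.+1 =
  (1 + q * (fractal q m).1,
   [seq Rw q (fractal q m).1 a r | a <- iota 0 q, r <- (fractal q m).2]).
Proof. by []. Qed.

Lemma Rw_all q c' a (r : seq entry) : size r = c' ->
  all (fun s => size s == c') [seq (if b == a then r else nseq c' None) | b <- iota 0 q].
Proof.
move=> Hr; apply/allP => s /mapP[b _ ->]; by case: ifP => _; rewrite ?size_nseq ?Hr.
Qed.

Lemma size_Rw q c' a (r : seq entry) : size r = c' -> size (Rw q c' a r) = 1 + q * c'.
Proof.
move=> Hr; rewrite /Rw /= (flat_size (Rw_all q a Hr)) size_map size_iota.
by rewrite add1n mulnC.
Qed.

Lemma nth_Rw q c' a (r : seq entry) b j : size r = c' -> b < q -> j < c' ->
  nth None (Rw q c' a r) (1 + b * c' + j) = if b == a then nth None r j else None.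
Proof.
move=> Hr Hb Hj; rewrite /Rw -addnA add1n /=.
rewrite (flat_nth _ (Rw_all q a Hr)) ?size_map ?size_iota //.
rewrite (nth_map 0) ?size_iota // nth_iota // add0n.
by case: ifP => _ //; rewrite nth_nseq if_same.
Qed.

Lemma nth_Rw0 q c' a (r : seq entry) : nth None (Rw q c' a r) 0 = Some a.
Proof. by []. Qed.

Lemma nth_Rw_gen q c' a (r : seq entry) j : size r = c' -> 0 < j -> j < 1 + q * c' ->
  nth None (Rw q c' a r) j =
  if j.-1 %/ c' == a then nth None r (j.-1 %% c') else None.
Proof.
move=> Hr Hj0 Hj.
have Hc : 0 < c'.
  case: c' {Hr} Hj => [|//]; rewrite muln0; lia.
have Hb : j.-1 %/ c' < q by rewrite ltn_divLR //; lia.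
have -> : j = 1 + j.-1 %/ c' * c' + j.-1 %% c'.
  by rewrite -addnA -divn_eq; lia.
rewrite nth_Rw // ?ltn_pmod //.
have -> : (1 + j.-1 %/ c' * c' + j.-1 %% c').-1 = j.-1 by rewrite -addnA -divn_eq.
done.
Qed.

Lemma fractal_rows q m : forall r, r \in (fractal q m).2 -> size r = (fractal q m).1.
Proof.
elim: m => [|m IH] r /=; first by rewrite inE => /eqP ->.
move/allpairsP => [[a r'] [_ /= Hr' ->]].
by rewrite size_Rw // IH.
Qed.

Lemma fractal_size q m : size (fractal q m).2 + (fractal q m).1 = 1 + q * (fractal q m).1.
Proof.
elim: m => [|m IH]; first by rewrite /= muln0.
rewrite fractalS /= size_allpairs size_iota.
set c := (fractal q m).1 in IH *; set s := size _ in IH *.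
rewrite mulnDr muln1 addnCA -mulnDr IH mulnDr muln1; lia.
Qed.

Lemma sub_in_count (T : eqType) (a1 a2 : pred T) s :
  {in s, forall x, a1 x -> a2 x} -> count a1 s <= count a2 s.
Proof.
elim: s => //= x s IH H; rewrite leq_add //.
  by have := H x (mem_head x s); case: (a1 x) => // ->.
by apply: IH => y ys; apply: H; rewrite inE ys orbT.
Qed.

Lemma count_split (P : pred nat) c x n : x + n <= c ->
  count P (iota 0 c) = count P (iota 0 x) + count (fun j => P (x + j)) (iota 0 n)
                       + count P (iota (x + n) (c - x - n)).
Proof.
move=> H.
rewrite {1}(_ : c = x + (n + (c - x - n))); last by lia.
rewrite iotaD iotaD !count_cat add0n addnA.
by rewrite -{2}(addn0 x) iotaDl count_map.
Qed.

Lemma sumn_if (b N : nat) (s : seq nat) :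
  sumn [seq (if x == b then N else 0) | x <- s] = count_mem b s * N.
Proof.
elim: s => //= x s ->; rewrite mulnDl.
by case: (x == b); rewrite ?mul1n ?mul0n.
Qed.

Lemma count_blocks (T : Type) (P : pred T) (f : nat -> seq T) q b N : b < q ->
  (forall x, x < q -> count P (f x) = if x == b then N else 0) ->
  count P (flatten [seq f x | x <- iota 0 q]) = N.
Proof.
move=> Hb H; rewrite count_flatten -map_comp.
have -> : [seq (count P \o f) x | x <- iota 0 q] = [seq (if x == b then N else 0) | x <- iota 0 q].
  by apply/eq_in_map => x; rewrite mem_iota add0n => Hx; apply: H.
by rewrite sumn_if count_uniq_mem ?iota_uniq // mem_iota Hb mul1n.
Qed.

Definition nz j (r : seq entry) := nth None r j != None.
Definition Sp i a (r : seq entry) := (nth None r i == None) || (nth None r i == Some a).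
Definition Cnt (M : smatrix) c i a :=
  count (fun j => (j != i) && has (nz j) (filter (Sp i a) M)) (iota 0 c).
Definition K (M : smatrix) i a := count (is_a_row i a) M.

Lemma memF q c' (F' : smatrix) z :
  z \in flatten [seq [seq Rw q c' a r | r <- F'] | a <- iota 0 q] ->
  exists a r, [/\ a < q, r \in F' & z = Rw q c' a r].
Proof.
move/flattenP => [s /mapP[a Ha ->] /mapP[r Hr ->]].
by exists a, r; split => //; move: Ha; rewrite mem_iota.
Qed.

Lemma fractal_bound q m i a : i < (fractal q m).1 ->
  Cnt (fractal q m).2 (fractal q m).1 i a + K (fractal q m).2 i a <= (fractal q m).1.
Proof.
elim: m i a => [|m IH] i a //.
have Hrows := @fractal_rows q m.
have Hsz := fractal_size q m.
rewrite fractalS /=.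
set c' := (fractal q m).1 in Hrows Hsz IH *.
set F' := (fractal q m).2 in Hrows Hsz IH *.
set F := flatten _.
move=> Hi.
case: i Hi => [|i1] Hi.
- case: (ltnP a q) => Haq.
  + have HK : K F 0 a = size F'.
      rewrite /K /F (count_blocks (b := a) (N := size F')) //.
      move=> x Hx; rewrite count_map.
      case: ifP => E.
        transitivity (count predT F'); last exact: count_predT.
        apply: eq_count => r; rewrite /= /is_a_row /=.
        by move/eqP: E => ->; rewrite eqxx.
      transitivity (count pred0 F'); last exact: count_pred0.
      apply: eq_count => r.
      rewrite /= /is_a_row /=; apply/negbTE/negP => /eqP [Ex]; by move: E; rewrite Ex eqxx.
    have Hin : forall j, j < 1 + q * c' ->
        (j != 0) && has (nz j) (filter (Sp 0 a) F) -> 1 + a * c' <= j < 1 + a * c' + c'.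
      move=> j Hj /andP[Hj0 /hasP[z]]; rewrite mem_filter => /andP[HS /memF[a' [r [Ha' Hr Ez]]]]; subst z.
      move: HS; rewrite /Sp /= => /eqP[Ea]; subst a'.
      rewrite /nz nth_Rw_gen ?Hrows // ?lt0n //.
      case: ifP => [/eqP Hdiv _|_]; last by rewrite eqxx.
      have Hc : 0 < c'.
        by rewrite lt0n; apply/negP => /eqP E0; move: Hj Hj0; rewrite E0 muln0; lia.
      have := divn_eq j.-1 c'; have := ltn_pmod j.-1 Hc; rewrite Hdiv; lia.
    have Hxc : 1 + a * c' + c' <= 1 + q * c'.
      by rewrite -addnA leq_add2l addnC -mulSn leq_mul2r Haq orbT.
    rewrite /Cnt (count_split _ Hxc).
    rewrite (eq_in_count (a1 := fun j => _ && _) (a2 := pred0) (s := iota 0 (1 + a * c'))); last first.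
      move=> j; rewrite mem_iota => /andP[_ Hj] /=; apply/negbTE/negP => /Hin; lia.
    rewrite (eq_in_count (a1 := fun j => _ && _) (a2 := pred0) (s := iota (1 + a * c' + c') _)); last first.
      move=> j; rewrite mem_iota => /andP[Hj1 Hj] /=; apply/negbTE/negP => /Hin; lia.
    rewrite !count_pred0 add0n addn0 HK.
    apply: leq_trans (leq_add (count_size _ _) (leqnn _)) _.
    by rewrite size_iota addnC Hsz.
  + have HK : K F 0 a = 0.
      rewrite /K (eq_in_count (a2 := pred0)) ?count_pred0 // => z /memF[a' [r [Ha' Hr ->]]].
      rewrite /is_a_row /=; apply/negbTE/negP => /eqP [E]; lia.
    by rewrite HK addn0 /Cnt (leq_trans (count_size _ _)) // size_iota.
- have Hc : 0 < c'.
    by rewrite lt0n; apply/negP => /eqP E0; move: Hi; rewrite E0 muln0; lia.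
  set b0 := i1 %/ c'. set i0 := i1 %% c'.
  have Hb0 : b0 < q by rewrite ltn_divLR //; lia.
  have Hi0 : i0 < c' by rewrite ltn_pmod.
  have Ei : i1.+1 = 1 + b0 * c' + i0 by rewrite -addnA -divn_eq.
  have HK : K F i1.+1 a = K F' i0 a.
    rewrite /K /F (count_blocks (b := b0) (N := count (is_a_row i0 a) F')) //.
    move=> x Hx; rewrite count_map.
    case: ifP => E.
      apply: eq_in_count => r Hr /=; by rewrite /is_a_row Ei nth_Rw ?Hrows // (eqP E) eqxx.
    rewrite (eq_in_count (a2 := pred0)) ?count_pred0 // => r Hr.
    have E' : (b0 == x) = false by rewrite eq_sym.
    by rewrite /= /is_a_row Ei nth_Rw ?Hrows // E'.
  have Hxc : 1 + b0 * c' + c' <= 1 + q * c'.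
    by rewrite -addnA leq_add2l addnC -mulSn leq_mul2r Hb0 orbT.
  rewrite /Cnt (count_split _ Hxc) HK.
  have Hmid : count (fun j => (1 + b0 * c' + j != i1.+1) &&
                      has (nz (1 + b0 * c' + j)) (filter (Sp i1.+1 a) F)) (iota 0 c')
              <= Cnt F' c' i0 a.
    apply: sub_in_count => j; rewrite mem_iota add0n => Hj.
    rewrite Ei eqn_add2l => /andP[Hne /hasP[z]].
    rewrite mem_filter => /andP[HS /memF[a' [r [Ha' Hr Ez]]]]; subst z.
    rewrite /nz nth_Rw ?Hrows //.
    case: ifP => [/eqP Ea Hnz|_]; last by rewrite eqxx.
    subst a'.
    rewrite Hne /=; apply/hasP; exists r => //.
    by rewrite mem_filter Hr andbT; move: HS; rewrite /Sp nth_Rw ?Hrows // eqxx.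
  have := IH i0 a Hi0.
  have := count_size (fun j => (j != i1.+1) && has (nz j) (filter (Sp i1.+1 a) F)) (iota 0 (1 + b0 * c')).
  have := count_size (fun j => (j != i1.+1) && has (nz j) (filter (Sp i1.+1 a) F))
            (iota (1 + b0 * c' + c') (1 + q * c' - (1 + b0 * c') - c')).
  rewrite !size_iota.
  move: Hmid Hxc.
  set X := b0 * c'. set Y := q * c'.
  set A1 := count _ (iota 0 (1 + X)). set A2 := count _ (iota 0 c').
  set A3 := count _ (iota (1 + X + c') _). lia.
Qed.

Lemma count_bump (P : pred nat) i c : i < c ->
  count (fun j => P (bump i j)) (iota 0 c.-1) = count (fun j => (j != i) && P j) (iota 0 c).
Proof.
move=> Hi.
have Ec : c = i + (1 + (c - i.+1)) by lia.
have Ec1 : c.-1 = i + (c - i.+1) by lia.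
rewrite Ec1 [in RHS]Ec !iotaD !count_cat add0n /= eqxx /= add0n.
congr (_ + _).
  apply: eq_in_count => j; rewrite mem_iota add0n => /andP[_ Hj].
  by rewrite /bump leqNgt Hj add0n neq_ltn Hj.
rewrite [i + 1]addnC iotaDl count_map; apply: eq_in_count => j; rewrite mem_iota => /andP[Hj _].
by rewrite /bump Hj /= add1n; case: (eqVneq j.+1 i) => // E; lia.
Qed.

Lemma size_delcol (r : seq entry) i : i < size r -> size (delcol i r) = (size r).-1.
Proof. move=> H; rewrite /delcol size_cat size_drop size_takel. move: H; set n := size r; clear; move=> H; lia. by apply: ltnW. Qed.

Lemma nth_delcol (r : seq entry) i j : i < size r -> j < (size r).-1 ->
  nth None (delcol i r) j = nth None r (bump i j).
Proof.
move=> Hi Hj; rewrite /delcol nth_cat size_takel; last exact: ltnW.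
case: ltnP => Hji.
  by rewrite nth_take // /bump leqNgt Hji.
rewrite nth_drop /bump Hji; congr nth; lia.
Qed.

Lemma bang_bound q c (M : smatrix) i a : i < c -> (forall r, r \in M -> size r = c) ->
  (bang q c M i a).1 <= Cnt M c i a + K M i a.
Proof.
move=> Hi Hrows.
rewrite /bang /=.
set M1 := [seq r <- M | _].
set k := count (is_a_row i a) M1.
set M2 := flatten _.
have HM2 : forall r2, r2 \in M2 -> exists r, r \in M1 /\ exists s, r2 = delcol i r ++ s.
  move=> r2 /flattenP[s /mapP[p Hp ->]].
  have Hr : nth [::] M1 p \in M1 by apply: mem_nth; move: Hp; rewrite mem_iota.
  case: ifP => _.
    by move/mapP => [v _ ->]; exists (nth [::] M1 p); split => //; eexists.
  by rewrite inE => /eqP ->; exists (nth [::] M1 p); split => //; eexists.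
have Hk : k = K M i a.
  rewrite /k /M1 count_filter /K; apply: eq_count => r /=.
  by rewrite /is_a_row; case: (nth None r i == Some a); rewrite ?orbT.
rewrite size_filter iotaD count_cat add0n -Hk.
apply: leq_add; last by rewrite (leq_trans (count_size _ _)) // size_iota.
rewrite /Cnt -count_bump //.
apply: sub_in_count => j; rewrite mem_iota add0n => /andP[_ Hj] /hasP[r2 /HM2[r [Hr [s ->]]]].
have Hrc : size r = c by apply: Hrows; move: Hr; rewrite mem_filter => /andP[_].
rewrite /= nth_cat size_delcol ?Hrc // Hj nth_delcol ?Hrc // => Hnz.
by apply/hasP; exists r.
Qed.

Lemma perm_CK (M M' : smatrix) c i a : perm_eq M M' ->
  Cnt M c i a + K M i a = Cnt M' c i a + K M' i a.
Proof.
move=> H; rewrite /K (permP H); congr (_ + _).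
by apply: eq_count => j /=; rewrite (perm_has _ (perm_filter _ H)).
Qed.

Lemma permcols_CK (p : seq nat) (F : smatrix) c i a : perm_eq p (iota 0 c) -> i < c ->
  Cnt (permcols p F) c i a + K (permcols p F) i a =
  Cnt F c (nth 0 p i) a + K F (nth 0 p i) a.
Proof.
move=> Hp Hi.
have Hsz : size p = c by rewrite (perm_size Hp) size_iota.
have Hu : uniq p by rewrite (perm_uniq Hp) iota_uniq.
have Hn : forall (r : seq entry) j, j < c -> nth None [seq nth None r j0 | j0 <- p] j = nth None r (nth 0 p j).
  by move=> r j Hj; rewrite (nth_map 0) // Hsz.
congr (_ + _).
  rewrite /Cnt /permcols filter_map.
  have -> : [seq x <- F | preim (fun r => [seq nth None r j | j <- p]) (Sp i a) x] =
            [seq x <- F | Sp (nth 0 p i) a x].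
    by apply: eq_filter => r /=; rewrite /Sp Hn.
  set X := [seq x <- F | _].
  transitivity (count (fun j => (j != nth 0 p i) && has (nz j) X) [seq nth 0 p j | j <- iota 0 c]).
    rewrite count_map; apply: eq_in_count => j; rewrite mem_iota add0n => Hj /=.
    rewrite (nth_uniq 0) ?Hsz // has_map; congr (_ && _).
    by apply: eq_has => r /=; rewrite /nz Hn.
  by rewrite -Hsz -/(mkseq _ _) mkseq_nth (permP Hp) Hsz.
rewrite /K /permcols count_map; apply: eq_count => r /=.
by rewrite /is_a_row Hn.
Qed.

Theorem mainTheorem13 (q m c : nat) (M : smatrix) :
  2 <= q -> 1 <= m -> is_fractal_from q m c M -> non_expandable q c M.
Proof.
move=> _ _ [Hc [p [Hp HM]]] i a Hi _.
have Hsz : size p = c by rewrite (perm_size Hp) size_iota.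
have Hrows : forall r, r \in M -> size r = c.
  move=> r; rewrite (perm_mem HM) => /mapP[r0 _ ->]; by rewrite size_map.
apply: leq_trans (bang_bound q a Hi Hrows) _.
rewrite (perm_CK _ _ _ HM) permcols_CK //.
have Hpi : nth 0 p i < c.
  by have := mem_nth 0 (_ : i < size p); rewrite (perm_mem Hp) mem_iota Hsz => /(_ Hi).
rewrite -Hc; apply: fractal_bound; by rewrite Hc.
Qed.
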